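(* Let $B$ be a finite skew brace and $X$ a sub-q-cycle set of $B$. Then the subgroup of $(B,+)$ generated by $X$ equals the subgroup of $(B,\circ)$ generated by $X$.
   Context: A skew brace is a triple $(B,+,\circ)$ where $(B,+)$ and $(B,\circ)$ are groups and $a\circ(b+c)=a\circ b-a+a\circ c$; $-a$, $a^-$ are additive and multiplicative inverses, $\lambda_a(b):=-a+a\circ b$, $\delta_a(b):=a\circ b-a$. $B$ is a q-cycle set via $a\cdot b:=\lambda_{a^-}(b)$, $a:b:=\delta_{a^-}(b)$. A q-cycle set is a non-empty set with operations $\cdot,:$ such that each $y\mapsto x\cdot y$ is bijective and $(x\cdot y)\cdot(x\cdot z)=(y:x)\cdot(y\cdot z)$, $(x:y):(x:z)=(y\cdot x):(y:z)$, $(x\cdot y):(x\cdot z)=(y:x)\cdot(y:z)$; a sub-q-cycle set is a subset that is a q-cycle set under the restricted operations. *)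

(* Defs.v *)
From mathcomp Require Import all_boot.
Set Implicit Arguments. Unset Strict Implicit. Unset Printing Implicit Defensive.

Definition is_group (T : Type) (op : T -> T -> T) (e : T) (inv : T -> T) : Prop :=
  [/\ associative op, left_id e op, right_id e op,
      left_inverse e inv op & right_inverse e inv op].

Record skew_brace (T : Type) := SkewBrace {
  sb_add : T -> T -> T;
  sb_zero : T;
  sb_opp : T -> T;
  sb_mul : T -> T -> T;
  sb_one : T;
  sb_inv : T -> T;
  sb_add_group : is_group sb_add sb_zero sb_opp;
  sb_mul_group : is_group sb_mul sb_one sb_inv;
  sb_compat : forall a b c,
    sb_mul a (sb_add b c) = sb_add (sb_add (sb_mul a b) (sb_opp a)) (sb_mul a c)
}.

Section SkewBraceOps.
Variables (T : Type) (B : skew_brace T).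
Local Notation "a + b" := (sb_add B a b).
Local Notation "- a" := (sb_opp B a).
Local Notation "a 'o' b" := (sb_mul B a b) (at level 40, left associativity).

Definition sb_lambda (a b : T) : T := - a + (a o b).
Definition sb_delta (a b : T) : T := (a o b) + - a.

Definition qdot (a b : T) : T := sb_lambda (sb_inv B a) b.
Definition qcolon (a b : T) : T := sb_delta (sb_inv B a) b.
End SkewBraceOps.

Section Sub.
Variables (T : finType) (B : skew_brace T).
Local Notation dot := (qdot B).
Local Notation col := (qcolon B).

Definition is_sub_qcycle_set (X : {set T}) : Prop :=
  X != set0 /\ [/\
      (forall x y, x \in X -> y \in X -> dot x y \in X /\ col x y \in X),
      (forall x, x \in X -> forall z, z \in X ->
          exists! y, y \in X /\ dot x y = z),
      (forall x y z, x \in X -> y \in X -> z \in X ->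
          dot (dot x y) (dot x z) = dot (col y x) (dot y z)),
      (forall x y z, x \in X -> y \in X -> z \in X ->
          col (col x y) (col x z) = col (dot y x) (col y z)) &
      (forall x y z, x \in X -> y \in X -> z \in X ->
          col (dot x y) (dot x z) = dot (col y x) (col y z))].

Definition is_subgroupb (op : T -> T -> T) (e : T) (inv : T -> T) (H : {set T}) : bool :=
  [&& e \in H, [forall a in H, forall b in H, op a b \in H]
    & [forall a in H, inv a \in H]].

Definition gen_subgroup (op : T -> T -> T) (e : T) (inv : T -> T) (X : {set T}) : {set T} :=
  [set x | [forall H : {set T}, (is_subgroupb op e inv H && (X \subset H)) ==> (x \in H)]].

Definition add_gen (X : {set T}) := gen_subgroup (sb_add B) (sb_zero B) (sb_opp B) X.
Definition mul_gen (X : {set T}) := gen_subgroup (sb_mul B) (sb_one B) (sb_inv B) X.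
End Sub.

(* Main.v *)
Require Import Defs.
From mathcomp Require Import all_boot.
From Stdlib Require Import ClassicalEpsilon.
Set Implicit Arguments. Unset Strict Implicit. Unset Printing Implicit Defensive.

Lemma grp_lcancel (T : Type) op (e : T) inv : is_group op e inv ->
  forall a x y, op a x = op a y -> x = y.
Proof.
case=> A l r li ri a x y H.
by rewrite -(l x) -(li a) -A H A li l.
Qed.

Lemma grp_rcancel (T : Type) op (e : T) inv : is_group op e inv ->
  forall a x y, op x a = op y a -> x = y.
Proof.
case=> A l r li ri a x y H.
by rewrite -(r x) -(ri a) A H -A ri r.
Qed.

Lemma grp_inv_uniq (T : Type) op (e : T) inv : is_group op e inv ->
  forall a b, op a b = e -> inv a = b.
Proof.
move=> G a b H; case: (G) => A l r li ri.
apply: (grp_lcancel G (a:=a)); by rewrite ri H.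
Qed.

Lemma finite_inv_closed (T : finType) op (e : T) inv (S : {set T}) :
  is_group op e inv -> e \in S -> (forall a b, a \in S -> b \in S -> op a b \in S) ->
  forall a, a \in S -> inv a \in S.
Proof.
move=> G eS cS a aS; have [A l r li ri] := G.
have itS : forall n, iter n (op a) e \in S by elim=> [|n IH] //=; exact: cS.
pose f := fun i : 'I_(#|T|.+1) => iter i (op a) e.
have : ~~ injectiveb f.
  apply/negP => /injectiveP /leq_card; by rewrite card_ord ltnn.
case/injectivePn => i [j] nij fij.
have key : forall m n, m < n -> iter m (op a) e = iter n (op a) e -> inv a \in S.
  move=> m n mn E.
  have inj : forall k x y, iter k (op a) x = iter k (op a) y -> x = y.
    elim=> [|k IH] x y //= H; apply: IH; exact: (grp_lcancel G H).
  have E2 : iter (n - m) (op a) e = e.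
    apply: (inj m); by rewrite -iterD addnC subnK ?(ltnW mn) // E.
  move: E2; case: (n - m) (subn_gt0 m n) => [|d]; first by rewrite mn.
  move=> _ /= E2; rewrite (grp_inv_uniq G E2); exact: itS.
rewrite /f in fij; case: (ltngtP i j) => h.
- exact: key h fij.
- exact: key h (esym fij).
- by move: nij; rewrite (val_inj h) eqxx.
Qed.

Lemma subgroupb_of (T : finType) op (e : T) inv (S : {set T}) :
  is_group op e inv -> e \in S -> (forall a b, a \in S -> b \in S -> op a b \in S) ->
  is_subgroupb op e inv S.
Proof.
move=> G eS cS; apply/and3P; split => //.
- apply/forall_inP => a aS; apply/forall_inP => b bS; exact: cS.
- apply/forall_inP => a aS; exact: finite_inv_closed G eS cS a aS.
Qed.

Lemma gen_sub (T : finType) op (e : T) inv (X H : {set T}) :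
  is_subgroupb op e inv H -> X \subset H -> gen_subgroup op e inv X \subset H.
Proof.
move=> sH XH; apply/subsetP => x; rewrite inE => /forallP /(_ H).
by rewrite sH XH => /implyP; apply.
Qed.

Lemma in_gen (T : finType) op (e : T) inv (X : {set T}) x :
  (forall H : {set T}, is_subgroupb op e inv H -> X \subset H -> x \in H) ->
  x \in gen_subgroup op e inv X.
Proof.
move=> P; rewrite inE; apply/forallP => H; apply/implyP => /andP [h1 h2]; exact: P.
Qed.

Definition pset (T : finType) (P : T -> Prop) : {set T} :=
  [set x | if excluded_middle_informative (P x) then true else false].

Lemma psetP (T : finType) (P : T -> Prop) x : x \in pset P <-> P x.
Proof.
rewrite inE; case: excluded_middle_informative => //.
Qed.

Lemma sb_one_zero (T : Type) (B : skew_brace T) : sb_one B = sb_zero B.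
Proof.
have [A l r li ri] := sb_add_group B.
have [mA ml mr mli mri] := sb_mul_group B.
have H : forall a, sb_mul B a (sb_zero B) = a.
  move=> a; have := sb_compat B a (sb_zero B) (sb_zero B).
  rewrite l => E.
  have E2 : sb_add B (sb_zero B) (sb_mul B a (sb_zero B)) =
            sb_add B (sb_add B (sb_mul B a (sb_zero B)) (sb_opp B a)) (sb_mul B a (sb_zero B)).
    by rewrite l -E.
  have E3 := grp_rcancel (sb_add_group B) E2.
  have : sb_add B (sb_zero B) a = sb_add B (sb_add B (sb_mul B a (sb_zero B)) (sb_opp B a)) a.
    by rewrite -E3.
  by rewrite l -A li r.
by rewrite -(H (sb_one B)) ml.
Qed.

Lemma sb_mul_eq (T : Type) (B : skew_brace T) a b :
  sb_mul B a b = sb_add B a (sb_lambda B a b).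
Proof.
have [A l r li ri] := sb_add_group B.
by rewrite /sb_lambda A ri l.
Qed.

Lemma sb_lam_add (T : Type) (B : skew_brace T) a b c :
  sb_lambda B a (sb_add B b c) = sb_add B (sb_lambda B a b) (sb_lambda B a c).
Proof.
have [A l r li ri] := sb_add_group B.
by rewrite /sb_lambda sb_compat !A.
Qed.

Lemma sb_lam_zero (T : Type) (B : skew_brace T) a :
  sb_lambda B a (sb_zero B) = sb_zero B.
Proof.
have [A l r li ri] := sb_add_group B.
apply: (grp_lcancel (sb_add_group B) (a := sb_lambda B a (sb_zero B))).
by rewrite -sb_lam_add !r.
Qed.

Lemma sb_lam_opp (T : Type) (B : skew_brace T) a b :
  sb_lambda B a (sb_opp B b) = sb_opp B (sb_lambda B a b).
Proof.
have [A l r li ri] := sb_add_group B.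
apply: esym; apply: (grp_inv_uniq (sb_add_group B)).
by rewrite -sb_lam_add ri sb_lam_zero.
Qed.

Lemma sb_opp_add (T : Type) (B : skew_brace T) a b :
  sb_opp B (sb_add B a b) = sb_add B (sb_opp B b) (sb_opp B a).
Proof.
have [A l r li ri] := sb_add_group B.
apply: (grp_inv_uniq (sb_add_group B)).
by rewrite A -(A a) ri r ri.
Qed.

Lemma sb_opp_opp (T : Type) (B : skew_brace T) a : sb_opp B (sb_opp B a) = a.
Proof.
have [A l r li ri] := sb_add_group B.
by apply: (grp_inv_uniq (sb_add_group B)); rewrite li.
Qed.

Lemma sb_lam_mul (T : Type) (B : skew_brace T) a b c :
  sb_lambda B (sb_mul B a b) c = sb_lambda B a (sb_lambda B b c).
Proof.
have [A l r li ri] := sb_add_group B.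
have [mA ml mr mli mri] := sb_mul_group B.
rewrite {3}/sb_lambda sb_lam_add sb_lam_opp.
rewrite /sb_lambda sb_opp_add sb_opp_opp mA.
by rewrite -A (A a) ri l.
Qed.

Lemma sb_lam_one (T : Type) (B : skew_brace T) c : sb_lambda B (sb_one B) c = c.
Proof.
have [A l r li ri] := sb_add_group B.
have [mA ml mr mli mri] := sb_mul_group B.
rewrite /sb_lambda ml sb_one_zero.
have -> : sb_opp B (sb_zero B) = sb_zero B by apply: (grp_inv_uniq (sb_add_group B)); rewrite l.
by rewrite l.
Qed.

Lemma sb_lam_inv (T : Type) (B : skew_brace T) a b :
  sb_lambda B a (sb_lambda B (sb_inv B a) b) = b.
Proof.
have [mA ml mr mli mri] := sb_mul_group B.
by rewrite -sb_lam_mul mri sb_lam_one.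
Qed.

Lemma sb_add_eq (T : Type) (B : skew_brace T) a b :
  sb_add B a b = sb_mul B a (sb_lambda B (sb_inv B a) b).
Proof. by rewrite sb_mul_eq sb_lam_inv. Qed.

Lemma sb_mul_add (T : Type) (B : skew_brace T) a b c :
  sb_add B (sb_mul B a b) c = sb_mul B a (sb_add B b (sb_lambda B (sb_inv B a) c)).
Proof.
have [A l r li ri] := sb_add_group B.
by rewrite !sb_mul_eq sb_lam_add sb_lam_inv A.
Qed.

Inductive inM (T : finType) (B : skew_brace T) (X : {set T}) : T -> Prop :=
| M1 : inM B X (sb_one B)
| MS y m : y \in X -> inM B X m -> inM B X (sb_mul B y m).

Inductive inA (T : finType) (B : skew_brace T) (X : {set T}) : T -> Prop :=
| A0 : inA B X (sb_zero B)
| AS y m : y \in X -> inA B X m -> inA B X (sb_add B y m).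

Definition Good (T : finType) (B : skew_brace T) (X : {set T}) w :=
  forall x, x \in X -> sb_lambda B w x \in X.

Lemma good_one (T : finType) (B : skew_brace T) (X : {set T}) : Good B X (sb_one B).
Proof. by move=> x xX; rewrite sb_lam_one. Qed.

Lemma good_mul (T : finType) (B : skew_brace T) (X : {set T}) a b :
  Good B X a -> Good B X b -> Good B X (sb_mul B a b).
Proof. by move=> ga gb x xX; rewrite sb_lam_mul; apply/ga/gb. Qed.

Lemma good_inv (T : finType) (B : skew_brace T) (X : {set T}) x :
  is_sub_qcycle_set B X -> x \in X -> Good B X (sb_inv B x).
Proof. by case=> _ [c _ _ _ _] xX y yX; have [] := c x y xX yX. Qed.

Lemma good_X (T : finType) (B : skew_brace T) (X : {set T}) x :
  is_sub_qcycle_set B X -> x \in X -> Good B X x.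
Proof.
case=> _ [_ s _ _ _] xX z zX; have [y [[yX E] _]] := s x xX z zX.
by rewrite -E /qdot sb_lam_inv.
Qed.

Lemma inM_addX (T : finType) (B : skew_brace T) (X : {set T}) :
  is_sub_qcycle_set B X -> forall u, inM B X u -> forall y, y \in X -> inM B X (sb_add B u y).
Proof.
move=> Q u; elim=> [|v u' vX _ IH] y yX.
- have [A l r li ri] := sb_add_group B.
  have [mA ml mr mli mri] := sb_mul_group B.
  rewrite sb_one_zero l -(mr y); exact: MS (M1 _ _).
- rewrite sb_mul_add; apply: MS => //; apply: IH; exact: good_inv Q vX y yX.
Qed.

Lemma inM_add_gen (T : finType) (B : skew_brace T) (X : {set T}) :
  is_sub_qcycle_set B X -> forall m, inM B X m -> forall w, Good B X w ->
  forall u, inM B X u -> inM B X (sb_add B u (sb_lambda B w m)).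
Proof.
have [A l r li ri] := sb_add_group B.
move=> Q m; elim=> [|y m' yX _ IH] w gw u uM.
- by rewrite sb_one_zero sb_lam_zero r.
- rewrite sb_mul_eq sb_lam_add -sb_lam_mul A; apply: IH.
    by apply: good_mul gw (good_X Q yX).
  exact: inM_addX Q _ uM _ (gw _ yX).
Qed.

Lemma inM_add (T : finType) (B : skew_brace T) (X : {set T}) :
  is_sub_qcycle_set B X -> forall u m, inM B X u -> inM B X m -> inM B X (sb_add B u m).
Proof.
move=> Q u m uM mM; have := inM_add_gen Q mM (@good_one _ B X) uM.
by rewrite sb_lam_one.
Qed.

Lemma inA_good (T : finType) (B : skew_brace T) (X : {set T}) :
  is_sub_qcycle_set B X -> forall a, inA B X a -> forall w, Good B X w ->
  Good B X (sb_lambda B w a).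
Proof.
move=> Q a; elim=> [|z a' zX _ IH] w gw.
- by rewrite sb_lam_zero -sb_one_zero; exact: good_one.
- rewrite sb_lam_add sb_add_eq; apply: good_mul; first exact: good_X Q (gw _ zX).
  rewrite -sb_lam_mul; apply: IH; apply: good_mul; [exact: good_inv Q (gw _ zX) | exact: gw].
Qed.

Lemma inA_lam (T : finType) (B : skew_brace T) (X : {set T}) a :
  Good B X a -> forall b, inA B X b -> inA B X (sb_lambda B a b).
Proof.
move=> ga b; elim=> [|z b' zX _ IH].
- rewrite sb_lam_zero; exact: A0.
- rewrite sb_lam_add; apply: AS => //; exact: ga.
Qed.

Lemma inA_add (T : finType) (B : skew_brace T) (X : {set T}) a b :
  inA B X a -> inA B X b -> inA B X (sb_add B a b).
Proof.
have [A l r li ri] := sb_add_group B.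
move=> aA bA; elim: aA => [|z a' zX _ IH]; first by rewrite l.
by rewrite -A; apply: AS.
Qed.

Lemma inM_mul (T : finType) (B : skew_brace T) (X : {set T}) a b :
  inM B X a -> inM B X b -> inM B X (sb_mul B a b).
Proof.
have [A l r li ri] := sb_mul_group B.
move=> aA bA; elim: aA => [|z a' zX _ IH]; first by rewrite l.
by rewrite -A; apply: MS.
Qed.

Lemma inA_mul (T : finType) (B : skew_brace T) (X : {set T}) :
  is_sub_qcycle_set B X -> forall a b, inA B X a -> inA B X b -> inA B X (sb_mul B a b).
Proof.
move=> Q a b aA bA; rewrite sb_mul_eq; apply: inA_add; first exact: aA.
apply: inA_lam bA; have := inA_good Q aA (@good_one _ B X); by rewrite sb_lam_one.
Qed.

Lemma subgroupb_closed (T : finType) op (e : T) inv (H : {set T}) :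
  is_subgroupb op e inv H -> e \in H /\ (forall a b, a \in H -> b \in H -> op a b \in H).
Proof.
case/and3P => eH /forall_inP c _; split => // a b aH bH.
by have /forall_inP := c a aH; apply.
Qed.

Theorem mainTheorem18 (T : finType) (B : skew_brace T) (X : {set T}) :
  is_sub_qcycle_set B X -> add_gen B X = mul_gen B X.
Proof.
move=> Q; apply/setP => x; apply/idP/idP => xin.
-
  have sM : is_subgroupb (sb_add B) (sb_zero B) (sb_opp B) (pset (inM B X)).
    apply: subgroupb_of (sb_add_group B) _ _.
      by apply/psetP; rewrite -sb_one_zero; exact: M1.
    move=> a b /psetP aM /psetP bM; apply/psetP; exact: inM_add.
  have XM : X \subset pset (inM B X).
    apply/subsetP => y yX; apply/psetP.
    have [mA ml mr mli mri] := sb_mul_group B.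
    rewrite -(mr y); exact: MS (M1 _ _).
  have /psetP xM := subsetP (gen_sub sM XM) x xin.
  apply: in_gen => H sH XH; have [eH cH] := subgroupb_closed sH.
  elim: xM => [|y m yX _ IH] //; apply: cH => //; exact: (subsetP XH).
- have sA : is_subgroupb (sb_mul B) (sb_one B) (sb_inv B) (pset (inA B X)).
    apply: subgroupb_of (sb_mul_group B) _ _.
      by apply/psetP; rewrite sb_one_zero; exact: A0.
    move=> a b /psetP aM /psetP bM; apply/psetP; exact: inA_mul.
  have XA : X \subset pset (inA B X).
    apply/subsetP => y yX; apply/psetP.
    have [mA ml mr mli mri] := sb_add_group B.
    rewrite -(mr y); exact: AS (A0 _ _).
  have /psetP xA := subsetP (gen_sub sA XA) x xin.
  apply: in_gen => H sH XH; have [eH cH] := subgroupb_closed sH.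
  elim: xA => [|y m yX _ IH] //; apply: cH => //; exact: (subsetP XH).
Qed.
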